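(* Let $(\gamma,\delta)$ be any sequent, i.e. any ordered pair of annotated terms. Then $(\gamma,\delta)$ is derivable in the orthologic sequent calculus $\mathcal{P}$ if and only if $(\gamma,\delta)$ is valid in every ortholattice under every valuation. The ''if'' direction is completeness and the ''only if'' direction is soundness.
   Context: Terms are generated by the grammar $t ::= \mathrm{Var}(k) \mid \mathrm{Meet}(t,t) \mid \mathrm{Join}(t,t) \mid \mathrm{Not}(t)$, where $k$ ranges over positive integers. An annotated term is either $N$ (no formula), $L\,t$ (the term $t$ on the left), or $R\,t$ (the term $t$ on the right), for a term $t$. A sequent is an ordered pair $(\gamma,\delta)$ of annotated terms. An ortholattice is a structure $(S,\wedge,\vee,0,1,\neg)$ satisfying, for all $x,y,z$: - $x\vee y=y\vee x$ and $x\wedge y=y\wedge x$; - $x\vee(y\vee z)=(x\vee y)\vee z$ and $x\wedge(y\wedge z)=(x\wedge y)\wedge z$; - $x\vee x=x$ and $x\wedge x=x$; - $x\vee 1=1$ and $x\wedge 0=0$; - $x\vee 0=x$ and $x\wedge 1=x$; - $\neg\neg x=x$; - $x\vee\neg x=1$ and $x\wedge\neg x=0$; - $\neg(x\vee y)=\neg x\wedge\neg y$ and $\neg(x\wedge y)=\neg x\vee\neg y$; - $x\vee(x\wedge y)=x$ and $x\wedge(x\vee y)=x$. Its order is given by $x\le y \iff x\wedge y=x$. Given an ortholattice $O$ and a valuation $v$ from positive integers to $O$, a term $t$ evaluates to $[\![t]\!]_v\in O$ in the obvious way, with $\mathrm{Meet}\mapsto\wedge$, $\mathrm{Join}\mapsto\vee$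 and $\mathrm{Not}\mapsto\neg$. For annotated terms set $\lambda(L\,t)=[\![t]\!]_v$, $\lambda(R\,t)=\neg[\![t]\!]_v$ and $\lambda(N)=1$. The sequent $(\gamma,\delta)$ is valid in $O$ under $v$ if $\lambda(\gamma)\le\neg\lambda(\delta)$. For example, $(L\,s,R\,t)$ is valid iff $[\![s]\!]_v\le[\![t]\!]_v$. The proof system $\mathcal{P}$: the derivable sequents form the least set of sequents closed under the following rules, where $\gamma,\delta$ are arbitrary annotated terms and $a,b$ are terms. - Hyp: $(L\,a,R\,a)$. - Weaken: from $(\gamma,N)$ infer $(\gamma,\delta)$. - Contract: from $(\gamma,\gamma)$ infer $(\gamma,N)$. - Swap: from $(\gamma,\delta)$ infer $(\delta,\gamma)$. - LeftAnd1 and LeftAnd2: from $(\gamma,L\,a)$, respectively from $(\gamma,L\,b)$, infer $(\gamma,L\,\mathrm{Meet}(a,b))$. - LeftOr: from $(\gamma,L\,a)$ and $(\gamma,L\,b)$ infer $(\gamma,L\,\mathrm{Join}(a,b))$. - LeftNot: from $(\gamma,R\,a)$ infer $(\gamma,L\,\mathrm{Not}(a))$. - RightAnd: from $(\gamma,R\,a)$ and $(\gamma,R\,b)$ infer $(\gamma,R\,\mathrm{Meet}(a,b))$. - RightOr1 and RightOr2: from $(\gamma,R\,a)$, respectively from $(\gamma,R\,b)$, infer $(\gamma,R\,\mathrm{Join}(a,b))$. - RightNot: from $(\gamma,L\,a)$ infer $(\gamma,R\,\mathrm{Not}(a))$. - Cut: from $(\gamma,R\,b)$ and $(L\,b,\delta)$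 infer $(\gamma,\delta)$. *)

(* Defs.v *)
From Stdlib Require Import BinNums.

Inductive term : Type :=
| Var : positive -> term
| Meet : term -> term -> term
| Join : term -> term -> term
| Not : term -> term.

Inductive aterm : Type :=
| N : aterm
| L : term -> aterm
| R : term -> aterm.

Definition sequent : Type := (aterm * aterm)%type.

Inductive derivable : aterm -> aterm -> Prop :=
| Hyp : forall a, derivable (L a) (R a)
| Weaken : forall g d, derivable g N -> derivable g d
| Contract : forall g, derivable g g -> derivable g N
| Swap : forall g d, derivable g d -> derivable d g
| LeftAnd1 : forall g a b, derivable g (L a) -> derivable g (L (Meet a b))
| LeftAnd2 : forall g a b, derivable g (L b) -> derivable g (L (Meet a b))
| LeftOr : forall g a b, derivable g (L a) -> derivable g (L b) ->
    derivable g (L (Join a b))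
| LeftNot : forall g a, derivable g (R a) -> derivable g (L (Not a))
| RightAnd : forall g a b, derivable g (R a) -> derivable g (R b) ->
    derivable g (R (Meet a b))
| RightOr1 : forall g a b, derivable g (R a) -> derivable g (R (Join a b))
| RightOr2 : forall g a b, derivable g (R b) -> derivable g (R (Join a b))
| RightNot : forall g a, derivable g (L a) -> derivable g (R (Not a))
| Cut : forall g d b, derivable g (R b) -> derivable (L b) d -> derivable g d.

Record Ortholattice : Type := {
  carrier :> Type;
  ol_meet : carrier -> carrier -> carrier;
  ol_join : carrier -> carrier -> carrier;
  ol_zero : carrier;
  ol_one : carrier;
  ol_neg : carrier -> carrier;
  ol_joinC : forall x y, ol_join x y = ol_join y x;
  ol_meetC : forall x y, ol_meet x y = ol_meet y x;
  ol_joinA : forall x y z, ol_join x (ol_join y z) = ol_join (ol_join x y) z;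
  ol_meetA : forall x y z, ol_meet x (ol_meet y z) = ol_meet (ol_meet x y) z;
  ol_joinxx : forall x, ol_join x x = x;
  ol_meetxx : forall x, ol_meet x x = x;
  ol_join1 : forall x, ol_join x ol_one = ol_one;
  ol_meet0 : forall x, ol_meet x ol_zero = ol_zero;
  ol_join0 : forall x, ol_join x ol_zero = x;
  ol_meet1 : forall x, ol_meet x ol_one = x;
  ol_negK : forall x, ol_neg (ol_neg x) = x;
  ol_joinN : forall x, ol_join x (ol_neg x) = ol_one;
  ol_meetN : forall x, ol_meet x (ol_neg x) = ol_zero;
  ol_negJ : forall x y, ol_neg (ol_join x y) = ol_meet (ol_neg x) (ol_neg y);
  ol_negM : forall x y, ol_neg (ol_meet x y) = ol_join (ol_neg x) (ol_neg y);
  ol_absJ : forall x y, ol_join x (ol_meet x y) = x;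
  ol_absM : forall x y, ol_meet x (ol_join x y) = x
}.

Definition ol_le (O : Ortholattice) (x y : O) : Prop := ol_meet O x y = x.

Fixpoint eval (O : Ortholattice) (v : positive -> O) (t : term) : O :=
  match t with
  | Var k => v k
  | Meet a b => ol_meet O (eval O v a) (eval O v b)
  | Join a b => ol_join O (eval O v a) (eval O v b)
  | Not a => ol_neg O (eval O v a)
  end.

Definition lam (O : Ortholattice) (v : positive -> O) (g : aterm) : O :=
  match g with
  | N => ol_one O
  | L t => eval O v t
  | R t => ol_neg O (eval O v t)
  end.

Definition valid_in (O : Ortholattice) (v : positive -> O) (g d : aterm) : Prop :=
  ol_le O (lam O v g) (ol_neg O (lam O v d)).

(* Main.v *)
Require Import Defs.
From Stdlib Require Import BinNums.
From Stdlib Require Import ProofIrrelevance FunctionalExtensionality PropExtensionality ClassicalEpsilon.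

Section Sound.
Variable O : Ortholattice.
Notation le := (ol_le O).
Notation mt := (ol_meet O).
Notation jn := (ol_join O).
Notation ng := (ol_neg O).

Lemma o_refl x : le x x.
Proof. apply ol_meetxx. Qed.
Lemma o_trans x y z : le x y -> le y z -> le x z.
Proof. unfold ol_le; intros H1 H2. rewrite <- H1 at 1. rewrite <- ol_meetA, H2. exact H1. Qed.
Lemma o_meet_l x y : le (mt x y) x.
Proof. unfold ol_le. rewrite ol_meetC, ol_meetA, ol_meetxx. reflexivity. Qed.
Lemma o_meet_r x y : le (mt x y) y.
Proof. unfold ol_le. rewrite <- ol_meetA, ol_meetxx. reflexivity. Qed.
Lemma o_glb x y z : le z x -> le z y -> le z (mt x y).
Proof. unfold ol_le; intros H1 H2. rewrite ol_meetA, H1. exact H2. Qed.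
Lemma o_le_join x y : le x y -> jn x y = y.
Proof. unfold ol_le; intros H. rewrite <- H, ol_joinC, ol_meetC. apply ol_absJ. Qed.
Lemma o_join_le x y : jn x y = y -> le x y.
Proof. unfold ol_le; intros H. rewrite <- H. apply ol_absM. Qed.
Lemma o_join_l x y : le x (jn x y).
Proof. apply ol_absM. Qed.
Lemma o_join_r x y : le y (jn x y).
Proof. rewrite ol_joinC. apply ol_absM. Qed.
Lemma o_lub x y z : le x z -> le y z -> le (jn x y) z.
Proof. intros H1 H2. apply o_join_le. rewrite <- ol_joinA, (o_le_join _ _ H2). apply o_le_join; auto. Qed.
Lemma o_anti x y : le x y -> le (ng y) (ng x).
Proof. unfold ol_le at 1; intros H. apply o_join_le. rewrite <- H at 2. rewrite ol_negM. apply ol_joinC. Qed.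
Lemma o_top x : le x (ol_one O).
Proof. apply ol_meet1. Qed.
Lemma o_bot x : le (ol_zero O) x.
Proof. unfold ol_le. rewrite ol_meetC. apply ol_meet0. Qed.
End Sound.

Lemma soundness g d : derivable g d -> forall (O : Ortholattice) (v : positive -> O), valid_in O v g d.
Proof.
  intros H O v. unfold valid_in. induction H; simpl in *.
  - rewrite ol_negK. apply o_refl.
  - eapply o_trans; [exact IHderivable|]. apply o_anti, o_top.
  - eapply o_trans; [|apply o_bot]. rewrite <- (ol_meetN O (lam O v g)).
    apply o_glb; [apply o_refl|exact IHderivable].
  - pose proof (o_anti _ _ _ IHderivable) as H1. rewrite ol_negK in H1. exact H1.
  - eapply o_trans; [exact IHderivable|]. apply o_anti, o_meet_l.
  - eapply o_trans; [exact IHderivable|]. apply o_anti, o_meet_r.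
  - rewrite ol_negJ. apply o_glb; assumption.
  - exact IHderivable.
  - rewrite ol_negK in *. apply o_glb; assumption.
  - rewrite ol_negK in *. eapply o_trans; [exact IHderivable|apply o_join_l].
  - rewrite ol_negK in *. eapply o_trans; [exact IHderivable|apply o_join_r].
  - rewrite ol_negK. exact IHderivable.
  - rewrite ol_negK in IHderivable1. eapply o_trans; eassumption.
Qed.

Definition le (a b : term) : Prop := derivable (L a) (R b).
Definition eqv a b := le a b /\ le b a.

Lemma le_refl a : le a a.
Proof. apply Hyp. Qed.
Lemma le_trans a b c : le a b -> le b c -> le a c.
Proof. intros H1 H2. exact (Cut _ _ _ H1 H2). Qed.
Lemma meet_l a b : le (Meet a b) a.
Proof. exact (Swap _ _ (LeftAnd1 _ _ b (Swap _ _ (Hyp a)))). Qed.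
Lemma meet_r a b : le (Meet a b) b.
Proof. exact (Swap _ _ (LeftAnd2 _ a _ (Swap _ _ (Hyp b)))). Qed.
Lemma meet_glb a b c : le c a -> le c b -> le c (Meet a b).
Proof. intros; apply RightAnd; auto. Qed.
Lemma join_l a b : le a (Join a b).
Proof. apply RightOr1, Hyp. Qed.
Lemma join_r a b : le b (Join a b).
Proof. apply RightOr2, Hyp. Qed.
Lemma join_lub a b c : le a c -> le b c -> le (Join a b) c.
Proof. intros H1 H2. apply Swap, LeftOr; apply Swap; auto. Qed.
Lemma nn_r a : le a (Not (Not a)).
Proof. apply RightNot, LeftNot, Hyp. Qed.
Lemma nn_l a : le (Not (Not a)) a.
Proof. apply Swap, LeftNot, RightNot, Swap, Hyp. Qed.
Lemma not_anti a b : le a b -> le (Not b) (Not a).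
Proof. intros H. apply RightNot, Swap, LeftNot, H. Qed.
Lemma contra_self a : derivable (L (Meet a (Not a))) (L (Meet a (Not a))).
Proof. exact (Cut _ _ _ (meet_l a (Not a)) (LeftAnd2 _ a _ (LeftNot _ _ (Hyp a)))). Qed.
Lemma contra a c : le (Meet a (Not a)) c.
Proof. apply Weaken, Contract, contra_self. Qed.

Definition zero_t := Meet (Var xH) (Not (Var xH)).
Definition one_t := Not zero_t.
Lemma bot_le c : le zero_t c.
Proof. apply contra. Qed.
Lemma le_top a : le a one_t.
Proof. apply RightNot, Swap, Weaken, Contract, contra_self. Qed.

Lemma meet_mono a a' b b' : le a a' -> le b b' -> le (Meet a b) (Meet a' b').
Proof. intros H1 H2; apply meet_glb; [exact (le_trans _ _ _ (meet_l _ _) H1)|exact (le_trans _ _ _ (meet_r _ _) H2)]. Qed.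
Lemma join_mono a a' b b' : le a a' -> le b b' -> le (Join a b) (Join a' b').
Proof. intros H1 H2; apply join_lub; [exact (le_trans _ _ _ H1 (join_l _ _))|exact (le_trans _ _ _ H2 (join_r _ _))]. Qed.

Ltac sp := split.

Lemma e_meetC a b : eqv (Meet a b) (Meet b a).
Proof. sp; apply meet_glb; auto using meet_l, meet_r. Qed.
Lemma e_joinC a b : eqv (Join a b) (Join b a).
Proof. sp; apply join_lub; auto using join_l, join_r. Qed.
Lemma e_meetA a b c : eqv (Meet a (Meet b c)) (Meet (Meet a b) c).
Proof.
  sp; repeat apply meet_glb; eauto using meet_l, meet_r, le_trans.
Qed.
Lemma e_joinA a b c : eqv (Join a (Join b c)) (Join (Join a b) c).
Proof.
  sp; repeat apply join_lub; eauto using join_l, join_r, le_trans.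
Qed.
Lemma e_meetxx a : eqv (Meet a a) a.
Proof. sp; [apply meet_l|apply meet_glb; apply le_refl]. Qed.
Lemma e_joinxx a : eqv (Join a a) a.
Proof. sp; [apply join_lub; apply le_refl|apply join_l]. Qed.
Lemma e_join1 a : eqv (Join a one_t) one_t.
Proof. sp; [apply le_top|apply join_r]. Qed.
Lemma e_meet0 a : eqv (Meet a zero_t) zero_t.
Proof. sp; [apply meet_r|apply bot_le]. Qed.
Lemma e_join0 a : eqv (Join a zero_t) a.
Proof. sp; [apply join_lub; [apply le_refl|apply bot_le]|apply join_l]. Qed.
Lemma e_meet1 a : eqv (Meet a one_t) a.
Proof. sp; [apply meet_l|apply meet_glb; [apply le_refl|apply le_top]]. Qed.
Lemma e_negK a : eqv (Not (Not a)) a.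
Proof. sp; [apply nn_l|apply nn_r]. Qed.
Lemma e_meetN a : eqv (Meet a (Not a)) zero_t.
Proof. sp; [apply contra|apply bot_le]. Qed.
Lemma e_joinN a : eqv (Join a (Not a)) one_t.
Proof.
  sp; [apply le_top|].
  assert (H : le (Not (Join a (Not a))) (Not one_t)).
  { eapply le_trans; [|apply (contra (Not a))].
    apply meet_glb; apply not_anti; [apply join_l|apply join_r]. }
  apply not_anti in H.
  eapply le_trans; [apply nn_r|]. eapply le_trans; [exact H|apply nn_l].
Qed.
Lemma e_negJ a b : eqv (Not (Join a b)) (Meet (Not a) (Not b)).
Proof.
  sp.
  - apply meet_glb; apply not_anti; auto using join_l, join_r.
  - eapply le_trans; [apply nn_r|]. apply not_anti.
    apply join_lub; (eapply le_trans; [apply nn_r|]); apply not_anti;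
      auto using meet_l, meet_r.
Qed.
Lemma e_negM a b : eqv (Not (Meet a b)) (Join (Not a) (Not b)).
Proof.
  sp.
  - eapply le_trans; [|apply nn_l]. apply not_anti.
    apply meet_glb; (eapply le_trans; [|apply nn_l]); apply not_anti;
      auto using join_l, join_r.
  - apply join_lub; apply not_anti; auto using meet_l, meet_r.
Qed.
Lemma e_absJ a b : eqv (Join a (Meet a b)) a.
Proof. sp; [apply join_lub; [apply le_refl|apply meet_l]|apply join_l]. Qed.
Lemma e_absM a b : eqv (Meet a (Join a b)) a.
Proof. sp; [apply meet_l|apply meet_glb; [apply le_refl|apply join_l]]. Qed.

Definition cls (t : term) : term -> Prop := fun s => eqv s t.
Definition Q := {P : term -> Prop | exists t, P = cls t}.
Definition mk (t : term) : Q := exist _ (cls t) (ex_intro _ t eq_refl).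

Lemma sig_eq (x y : Q) : proj1_sig x = proj1_sig y -> x = y.
Proof. destruct x as [x px], y as [y py]; simpl; intros ->. f_equal. apply proof_irrelevance. Qed.

Lemma mk_eq a b : eqv a b -> mk a = mk b.
Proof.
  intros [H1 H2]. apply sig_eq; simpl. unfold cls.
  apply functional_extensionality; intro s. apply propositional_extensionality.
  unfold eqv; split; intros [h1 h2]; split; eauto using le_trans.
Qed.
Lemma mk_inj a b : mk a = mk b -> eqv a b.
Proof.
  intros H. apply (f_equal (@proj1_sig _ _)) in H. simpl in H.
  pose proof (equal_f H a) as Ha. unfold cls in Ha. rewrite <- Ha.
  split; apply le_refl.
Qed.
Lemma mk_surj (x : Q) : exists a, x = mk a.
Proof. destruct x as [P [t e]]. exists t. apply sig_eq. simpl. exact e. Qed.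

Definition rep (q : Q) : term := proj1_sig (constructive_indefinite_description _ (mk_surj q)).
Lemma mk_rep q : mk (rep q) = q.
Proof.
  unfold rep. destruct (constructive_indefinite_description _ (mk_surj q)) as [t e]. simpl.
  symmetry; exact e.
Qed.
Lemma rep_mk a : eqv (rep (mk a)) a.
Proof. apply mk_inj. apply mk_rep. Qed.

Definition qmeet x y := mk (Meet (rep x) (rep y)).
Definition qjoin x y := mk (Join (rep x) (rep y)).
Definition qneg x := mk (Not (rep x)).
Definition qzero := mk zero_t.
Definition qone := mk one_t.

Lemma qmeet_mk a b : qmeet (mk a) (mk b) = mk (Meet a b).
Proof. apply mk_eq. destruct (rep_mk a), (rep_mk b). split; apply meet_mono; auto. Qed.
Lemma qjoin_mk a b : qjoin (mk a) (mk b) = mk (Join a b).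
Proof. apply mk_eq. destruct (rep_mk a), (rep_mk b). split; apply join_mono; auto. Qed.
Lemma qneg_mk a : qneg (mk a) = mk (Not a).
Proof. apply mk_eq. destruct (rep_mk a). split; apply not_anti; auto. Qed.

Ltac qsolve :=
  intros;
  repeat match goal with
  | x : Q |- _ => let a := fresh "a" in destruct (mk_surj x) as [a ->]; clear x
  end;
  unfold qzero, qone;
  repeat (rewrite ?qmeet_mk, ?qjoin_mk, ?qneg_mk);
  apply mk_eq.

Definition LQ : Ortholattice.
Proof.
  refine {| carrier := Q; ol_meet := qmeet; ol_join := qjoin; ol_zero := qzero;
            ol_one := qone; ol_neg := qneg |}; qsolve.
  all: first [ apply e_joinC | apply e_meetC | apply e_joinA | apply e_meetA
             | apply e_joinxx | apply e_meetxx | apply e_join1 | apply e_meet0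
             | apply e_join0 | apply e_meet1 | apply e_negK | apply e_joinN
             | apply e_meetN | apply e_negJ | apply e_negM | apply e_absJ | apply e_absM ].
Defined.

Definition vQ : positive -> LQ := fun k => mk (Var k).

Lemma eval_Q t : eval LQ vQ t = mk t.
Proof.
  induction t; simpl; try rewrite IHt1, IHt2; try rewrite IHt; auto.
  - apply qmeet_mk.
  - apply qjoin_mk.
  - apply qneg_mk.
Qed.

Definition tm (g : aterm) : term :=
  match g with Defs.N => one_t | L t => t | R t => Not t end.

Lemma lam_Q g : lam LQ vQ g = mk (tm g).
Proof.
  destruct g; simpl; try reflexivity; rewrite eval_Q; try reflexivity. apply qneg_mk.
Qed.

Lemma toL X t : derivable X (R (Not t)) -> derivable X (L t).
Proof. intros H. exact (Cut _ _ _ H (Swap _ _ (LeftNot _ _ (Hyp t)))). Qed.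

Lemma fromtm g Y : derivable (L (tm g)) Y -> derivable g Y.
Proof.
  destruct g as [|t|t]; simpl; intros H.
  - refine (Cut _ _ _ _ H). apply Swap, Contract.
    apply RightNot, Swap, RightNot, contra_self.
  - exact H.
  - exact (Cut _ _ _ (RightNot _ _ (Swap _ _ (Hyp t))) H).
Qed.

Theorem mainTheorem1 (g d : aterm) :
  derivable g d <-> (forall (O : Ortholattice) (v : positive -> O), valid_in O v g d).
Proof.
  split; [apply soundness|].
  intros H. specialize (H LQ vQ). unfold valid_in, ol_le in H.
  rewrite !lam_Q in H. change (qmeet (mk (tm g)) (qneg (mk (tm d))) = mk (tm g)) in H.
  rewrite qneg_mk, qmeet_mk in H. apply mk_inj in H. destruct H as [_ H].
  assert (H1 : le (tm g) (Not (tm d))) by (eapply le_trans; [exact H|apply meet_r]).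
  apply toL, fromtm, Swap, fromtm, Swap in H1. exact H1.
Qed.
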